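(* Let $\Sigma$ be a finite alphabet, let $\mathcal D$ be a probability distribution over $\Sigma^\ast$, let $L_{\mathcal R}\subseteq\Sigma^\ast$ be the language of an RNN acceptor $\mathcal R$ (accessible only through membership queries $u\mapsto [u\in L_{\mathcal R}]$), let $\psi$ be an LTL formula (the query), and let $\varepsilon,\delta\in(0,1)$. Run the procedure LEXR described in the context on these inputs. Then the probability (over the random test words drawn by the verifier) that LEXR terminates and returns an LTL formula $\varphi$ which is not an $\varepsilon$-explanation for $\mathcal R$ and $\psi$ is at most $\delta$; i.e., whenever LEXR returns a formula $\varphi$, it is an $\varepsilon$-explanation, meaning $\mathbf P_{\mathcal D}\big(L(\varphi)\oplus(L_{\mathcal R}\cap L(\psi))\big)<\varepsilon$, with probability at least $1-\delta$.
   Context: Words are finite sequences over the finite alphabet $\Sigma$; $\Sigma^\ast$ is the set of all finite words, $\lambda$ the empty word. An RNN acceptor $\mathcal R$ is given abstractly by a state-update map $g:\mathbb R^{d_s}\times\Sigma\to\mathbb R^{d_s}$, an initial state $s_I$, and a classifier $f:\mathbb R^{d_s}\to\{0,1\}$; extending $g$ to words by $g^\ast(s,\lambda)=s$, $g^\ast(s,ua)=g(g^\ast(s,u),a)$, its language is $L(\mathcal R)=\{u\in\Sigma^\ast: f(g^\ast(s_I,u))=1\}$. LTL formulas are generated by $\varphi::= a\in\Sigma\mid\neg\varphi\mid\varphi\vee\varphi\mid \mathbf X\varphi\mid \varphi\,\mathbf U\,\varphi$ (with the usual abbreviations $\top,\bot,\wedge,\to,\mathbf F\varphi=\top\mathbf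 U\varphi,\mathbf G\varphi=\neg\mathbf F\neg\varphi$), interpreted over finite words $u=a_1\dots a_n$: $(u,i)\models a$ iff $a_i=a$; negation and disjunction as usual; $(u,i)\models\mathbf X\varphi$ iff $i<n$ and $(u,i+1)\models\varphi$; $(u,i)\models\varphi_1\mathbf U\varphi_2$ iff there is $j\in\{i,\dots,n\}$ with $(u,j)\models\varphi_2$ and $(u,k)\models\varphi_1$ for all $i\le k<j$. $u\models\varphi$ means $(u,1)\models\varphi$, and $L(\varphi)=\{u: u\models\varphi\}$. $\oplus$ denotes symmetric difference of languages. A formula $\varphi$ is an $\varepsilon$-explanation for $\mathcal R$ and $\psi$ if $\mathbf P_{\mathcal D}(\{u\in\Sigma^\ast: u\in L(\varphi)\oplus(L(\mathcal R)\cap L(\psi))\})<\varepsilon$. Procedure LEXR: maintain a finite sample $\mathcal S\subset\Sigma^\ast\times\{0,1\}$, initially empty. In iteration $i=1,2,\dots$: (1) the learner outputs an LTL formula $\varphi$ consistent with $\mathcal S$ (every $(u,1)\in\mathcal S$ satisfies $u\models\varphi$ and every $(u,0)\in\mathcal S$ satisfies $u\not\models\varphi$; the paper's learner picks one of minimal size via SAT solving); (2) the verifier draws a test suite $T_i$ of $r_i=\lceil\frac1\varepsilon(i\ln 2-\ln\delta)\rceil$ words independently according to $\mathcal D$ and checks whether some $u\in T_i$ lies in $L(\varphi)\oplus(L(\mathcal R)\cap L(\psi))$ (a counterexample); (3) if there is no counterexample, LEXR terminates and returns $\varphi$; otherwise the counterexample(s) $u$ are added to $\mathcal S$ with label $1$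 if $u\in L(\mathcal R)\cap L(\psi)$ and label $0$ otherwise, and the next iteration starts. LEXR need not terminate. *)

(* Defs.v *)
From HB Require Import structures.
From mathcomp Require Import all_boot all_order all_algebra.
From mathcomp Require Import boolp classical_sets reals ereal esum exp.
Set Implicit Arguments. Unset Strict Implicit. Unset Printing Implicit Defensive.
Import Order.TTheory GRing.Theory Num.Theory.

Record rnn (R : realType) (Sigma : finType) := RNN {
  rnn_ds : nat;
  rnn_g  : 'rV[R]_rnn_ds -> Sigma -> 'rV[R]_rnn_ds;
  rnn_sI : 'rV[R]_rnn_ds;
  rnn_f  : 'rV[R]_rnn_ds -> bool }.                     (* classifier f (1 = true) *)

Definition rnn_run (R : realType) (Sigma : finType) (N : rnn R Sigma)
  (s : 'rV[R]_(rnn_ds N)) (u : seq Sigma) : 'rV[R]_(rnn_ds N) :=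
  foldl (@rnn_g R Sigma N) s u.

Definition rnn_lang (R : realType) (Sigma : finType) (N : rnn R Sigma)
  (u : seq Sigma) : bool := rnn_f (rnn_run (rnn_sI N) u).

Inductive ltl (Sigma : Type) :=
| LAtom of Sigma
| LNot of ltl Sigma
| LOr of ltl Sigma & ltl Sigma
| LNext of ltl Sigma
| LUntil of ltl Sigma & ltl Sigma.

(* (u, i) |= phi, positions are 1-based: 1 <= i <= n = size u *)
Fixpoint ltl_sat (Sigma : eqType) (u : seq Sigma) (phi : ltl Sigma) (i : nat)
  : bool :=
  match phi with
  | LAtom a => (0 < i) && (i <= size u) && (onth u i.-1 == Some a)
  | LNot p => ~~ ltl_sat u p i
  | LOr p q => ltl_sat u p i || ltl_sat u q i
  | LNext p => (i < size u) && ltl_sat u p i.+1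
  | LUntil p q =>
      has (fun j => ltl_sat u q j && all (fun k => ltl_sat u p k) (iota i (j - i)))
          (iota i ((size u).+1 - i))
  end.

Definition ltl_models (Sigma : eqType) (u : seq Sigma) (phi : ltl Sigma) : bool :=
  ltl_sat u phi 1.

Local Open Scope ring_scope.
Local Open Scope classical_set_scope.

Definition is_distr (R : realType) (Sigma : finType) (D : seq Sigma -> R) : Prop :=
  (forall u, 0 <= D u) /\ (\esum_(u in [set: seq Sigma]) (D u)%:E = 1%E).

Definition probD (R : realType) (Sigma : finType) (D : seq Sigma -> R)
  (A : set (seq Sigma)) : \bar R := \esum_(u in A) (D u)%:E.

Definition target (R : realType) (Sigma : finType) (N : rnn R Sigma)
  (psi : ltl Sigma) (u : seq Sigma) : bool :=
  rnn_lang N u && ltl_models u psi.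

Definition mismatch (R : realType) (Sigma : finType) (N : rnn R Sigma)
  (psi : ltl Sigma) (phi : ltl Sigma) (u : seq Sigma) : bool :=
  ltl_models u phi != target N psi u.

Definition eps_explanation (R : realType) (Sigma : finType) (D : seq Sigma -> R)
  (N : rnn R Sigma) (psi : ltl Sigma) (eps : R) (phi : ltl Sigma) : Prop :=
  (probD D [set u | mismatch N psi phi u] < eps%:E)%E.

Definition sample (Sigma : Type) := seq (seq Sigma * bool).

Definition consistent (Sigma : eqType) (phi : ltl Sigma) (S : sample Sigma) : Prop :=
  forall u b, (u, b) \in S -> ltl_models u phi = b.

Definition valid_learner (Sigma : eqType) (learner : sample Sigma -> ltl Sigma)
  : Prop :=
  forall S, (exists phi, consistent phi S) -> consistent (learner S) S.

Definition suite_size (R : realType) (eps delta : R) (i : nat) : nat :=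
  `|Num.ceil (eps^-1 * (i%:R * ln 2 - ln delta))|%N.

(* Run LEXR from sample S on the list of test suites ts (T_i, T_{i+1}, ...).
   Returns Some phi iff LEXR terminates exactly when checking the LAST suite
   of ts (all earlier suites contained counterexamples), outputting phi. *)
Fixpoint lexr_run (R : realType) (Sigma : finType) (N : rnn R Sigma)
  (psi : ltl Sigma) (learner : sample Sigma -> ltl Sigma)
  (S : sample Sigma) (ts : seq (seq (seq Sigma))) : option (ltl Sigma) :=
  match ts with
  | [::] => None
  | T :: ts' =>
      let phi := learner S in
      let cex := [seq u <- T | mismatch N psi phi u] in
      match ts' with
      | [::] => if cex == [::] then Some phi else None
      | _ :: _ =>
          if cex == [::] then None
          else lexr_run N psi learner (S ++ [seq (u, target N psi u) | u <- cex]) ts'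
      end
  end.

(* probability weight of a finite sequence of i.i.d. D-distributed test words *)
Definition suites_weight (R : realType) (Sigma : finType) (D : seq Sigma -> R)
  (ts : seq (seq (seq Sigma))) : R :=
  \prod_(T <- ts) \prod_(u <- T) D u.

(* The event "LEXR terminates (at some iteration n) and returns a formula that
   is not an eps-explanation": the draws T_1..T_n of the first n iterations
   have sizes r_1..r_n and lead to termination at iteration n with bad output.
   Events for distinct n are disjoint (different lengths), so its probability
   is the sum over n of the finite-dimensional product probabilities. *)
Definition lexr_bad_event (R : realType) (Sigma : finType) (D : seq Sigma -> R)
  (N : rnn R Sigma) (psi : ltl Sigma) (learner : sample Sigma -> ltl Sigma)
  (eps delta : R) : set (seq (seq (seq Sigma))) :=
  [set ts | (exists n, map size ts = [seq suite_size eps delta i | i <- iota 1 n]) /\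
            exists phi, lexr_run N psi learner [::] ts = Some phi /\
                        ~ eps_explanation D N psi eps phi].

Definition lexr_bad_prob (R : realType) (Sigma : finType) (D : seq Sigma -> R)
  (N : rnn R Sigma) (psi : ltl Sigma) (learner : sample Sigma -> ltl Sigma)
  (eps delta : R) : \bar R :=
  \esum_(ts in lexr_bad_event D N psi learner eps delta) (suites_weight D ts)%:E.

(* Main.v *)
Require Import Defs.
From HB Require Import structures.
From mathcomp Require Import all_boot all_order all_algebra.
From mathcomp Require Import boolp classical_sets reals ereal esum exp.
From mathcomp Require Import fsbigop cardinality lra sequences.
From mathcomp Require finmap.
Import Order.TTheory GRing.Theory Num.Theory.
Local Open Scope ring_scope.
Local Open Scope classical_set_scope.

Section Aux.
Variable R : realType.

Lemma group_sum (X K : eqType) (key : X -> K) (H : seq K) (L : seq X) (F : X -> R) :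
  uniq H -> (forall l, l \in L -> key l \in H) ->
  \sum_(l <- L) F l = \sum_(h <- H) \sum_(l <- L | key l == h) F l.
Proof.
move=> uH sub.
under [RHS]eq_bigr do rewrite big_mkcond.
rewrite exchange_big /=; rewrite big_seq [RHS]big_seq; apply: eq_bigr => l lL.
rewrite (bigD1_seq (key l)) ?sub //= eqxx big1 ?addr0 // => h.
by rewrite eq_sym => /negbTE ->.
Qed.

Lemma prod_bound (X : eqType) (D : X -> R) (P : pred X) (c : R) (x0 : X) :
  (forall u, 0 <= D u) -> 0 <= c ->
  (forall W : seq X, uniq W -> all P W -> \sum_(u <- W) D u <= c) ->
  forall r (Ts : seq (seq X)), uniq Ts ->
  (forall T, T \in Ts -> size T = r /\ all P T) ->
  \sum_(T <- Ts) \prod_(u <- T) D u <= c ^+ r.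
Proof.
move=> D0 c0 HW r; elim: r => [|r IH] Ts uTs HT.
  have sub : {subset Ts <= [:: [::]]}.
    by move=> T /HT [/size0nil -> _]; rewrite inE.
  have := uniq_leq_size uTs sub; case: Ts uTs HT sub => [|T [|T' Ts]] //= _ HT sub _.
    by rewrite big_nil expr0 ler01.
  have := sub T; rewrite !inE eqxx => /(_ isT) /eqP ->.
  by rewrite big_seq1 big_nil expr0.
rewrite (@group_sum _ _ (head x0) (undup (map (head x0) Ts)) Ts); first last.
- by move=> l lL; rewrite mem_undup; apply: map_f.
- exact: undup_uniq.
have key : forall h, h \in undup (map (head x0) Ts) ->
  \sum_(T <- Ts | head x0 T == h) \prod_(u <- T) D u =
  D h * \sum_(t <- map behead [seq T <- Ts | head x0 T == h]) \prod_(u <- t) D u.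
  move=> h _; rewrite big_map big_filter big_distrr /=.
  rewrite big_seq_cond [RHS]big_seq_cond; apply: eq_bigr => T /andP [TTs /eqP hT].
  have [sT _] := HT T TTs.
  by case: T sT hT {TTs} => // a t _ /= ->; rewrite big_cons.
rewrite big_seq (eq_bigr _ key) -big_seq.
apply: (@le_trans _ _ (\sum_(h <- undup (map (head x0) Ts)) D h * c ^+ r)).
  rewrite big_seq [X in _ <= X]big_seq; apply: ler_sum => h hH.
  apply: ler_wpM2l => //; apply: IH.
    rewrite map_inj_in_uniq ?filter_uniq //.
    move=> T1 T2; rewrite !mem_filter => /andP [/eqP h1 T1s] /andP [/eqP h2 T2s] eb.
    have [s1 _] := HT T1 T1s; have [s2 _] := HT T2 T2s.
    case: T1 T2 s1 s2 h1 h2 eb {T1s T2s} => [|a1 t1] [|a2 t2] //= _ _ -> -> -> //.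
  move=> t /mapP [T]; rewrite mem_filter => /andP [_ TTs] ->.
  have [sT aT] := HT T TTs.
  by case: T sT aT {TTs} => // a t' /= [->] /andP [].
rewrite -big_distrl /= exprS ler_wpM2r ?exprn_ge0 // HW ?undup_uniq //.
apply/allP => h; rewrite mem_undup => /mapP [T TTs ->].
have [sT aT] := HT T TTs.
by case: T sT aT {TTs} => // a t' /= _ /andP [].
Qed.

End Aux.

Lemma lexr_run_cons2 (R : realType) (Sigma : finType) (N : rnn R Sigma)
  (psi : ltl Sigma) (learner : sample Sigma -> ltl Sigma) S T t1 rest :
  lexr_run N psi learner S (T :: t1 :: rest) =
  if [seq u <- T | mismatch N psi (learner S) u] == [::] then None
  else lexr_run N psi learner
        (S ++ [seq (u, target N psi u) | u <- [seq u <- T | mismatch N psi (learner S) u]])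
        (t1 :: rest).
Proof. by []. Qed.

Lemma lexr_bound (R : realType) (Sigma : finType) (D : seq Sigma -> R) (N : rnn R Sigma)
  (psi : ltl Sigma) (learner : sample Sigma -> ltl Sigma) (eps : R) (rr : nat -> nat)
  (D0 : forall u, 0 <= D u) (eps1 : eps <= 1)
  (H1 : forall W, uniq W -> \sum_(u <- W) D u <= 1)
  (H2 : forall phi, ~ eps_explanation D N psi eps phi -> forall W, uniq W ->
        all (fun u => ~~ mismatch N psi phi u) W -> \sum_(u <- W) D u <= 1 - eps) :
  forall n k S (Fs : seq (seq (seq (seq Sigma)))), uniq Fs ->
  (forall ts, ts \in Fs -> map size ts = map rr (iota k n.+1) /\
     exists phi, lexr_run N psi learner S ts = Some phi /\ ~ eps_explanation D N psi eps phi) ->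
  \sum_(ts <- Fs) suites_weight D ts <= (1 - eps) ^+ rr (k + n)%N.
Proof.
have e0 : 0 <= 1 - eps by rewrite subr_ge0.
elim=> [|n IH] k S Fs uFs HF.
  case: (pselect (eps_explanation D N psi eps (learner S))) => good.
    rewrite big_seq big1 ?exprn_ge0 // => ts /HF [sz [phi [run bad]]]; exfalso.
    case: ts sz run => [|T [|? ?]] // _ /=; case: ifP => // _ [eq].
    by apply: bad; rewrite -eq.
  have E : forall ts, ts \in Fs -> ts = [:: head [::] ts] /\ size (head [::] ts) = rr k /\
      all (fun u => ~~ mismatch N psi (learner S) u) (head [::] ts).
    move=> ts /HF [sz [phi [run _]]].
    case: ts sz run => [|T [|? ?]] // [sT] /=; case: ifP => // /eqP cex _.
    split; [done|split; [done|]].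
    apply/allP => u uT; apply/negP => mu.
    have : u \in [seq u <- T | mismatch N psi (learner S) u] by rewrite mem_filter mu uT.
    by rewrite cex.
  rewrite big_seq (eq_bigr (fun ts => \prod_(u <- head [::] ts) D u)); last first.
    by move=> ts /E [e _]; rewrite /suites_weight [in LHS]e big_seq1.
  rewrite -big_seq -(big_map (head [::]) xpredT (fun T => \prod_(u <- T) D u)).
  apply: (@prod_bound R _ D (fun u => ~~ mismatch N psi (learner S) u) (1 - eps) [::]) => //.
  - by move=> W uW aW; apply: (H2 _ good).
  - rewrite (@map_inj_in_uniq _ _ (head [::]) Fs) // => t1 t2 /E [e1 _] /E [e2 _] eh.
    by rewrite e1 e2 eh.
  - by move=> T /mapP [ts /E [_ [s a]] ->]; rewrite addn0.
set H := undup (map (head [::]) Fs).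
rewrite (@group_sum _ _ _ (head [::]) H Fs); first last.
- by move=> l lL; rewrite mem_undup; apply: map_f.
- exact: undup_uniq.
have Hts : forall ts, ts \in Fs -> exists T ts', ts = T :: ts' /\ size T = rr k /\
    map size ts' = map rr (iota k.+1 n.+1) /\
    exists phi, lexr_run N psi learner
      (S ++ [seq (u, target N psi u) | u <- [seq u <- T | mismatch N psi (learner S) u]]) ts'
      = Some phi /\ ~ eps_explanation D N psi eps phi.
  move=> ts /HF [sz [phi [run bad]]].
  case: ts sz run => [|T [|t1 rest]] // sz0 run.
  have [sT sz] : size T = rr k /\ map size (t1::rest) = map rr (iota k.+1 n.+1).
    by move: sz0 => /= [-> -> ->].
  move: run; rewrite lexr_run_cons2; case: ifP => // _ run.
  by exists T, (t1 :: rest); split; [|split; [|split; [|exists phi]]].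
have key : forall h, h \in H ->
  \sum_(ts <- Fs | head [::] ts == h) suites_weight D ts =
  \prod_(u <- h) D u * \sum_(t <- map behead [seq ts <- Fs | head [::] ts == h]) suites_weight D t.
  move=> h _; rewrite big_map big_filter big_distrr /=.
  rewrite big_seq_cond [RHS]big_seq_cond; apply: eq_bigr => ts /andP [tsF /eqP hT].
  have [T [ts' [e _]]] := Hts ts tsF.
  by move: hT; rewrite e /= => ->; rewrite /suites_weight big_cons.
rewrite big_seq (eq_bigr _ key) -big_seq.
apply: (@le_trans _ _ (\sum_(h <- H) \prod_(u <- h) D u * (1 - eps) ^+ rr (k + n.+1)%N)).
  rewrite big_seq [X in _ <= X]big_seq; apply: ler_sum => h hH.
  apply: ler_wpM2l; first by apply: prodr_ge0.
  rewrite -addSnnS.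
  apply: (IH k.+1 (S ++ [seq (u, target N psi u) | u <- [seq u <- h | mismatch N psi (learner S) u]])).
    rewrite map_inj_in_uniq ?filter_uniq //.
    move=> T1 T2; rewrite !mem_filter => /andP [/eqP h1 T1s] /andP [/eqP h2 T2s] eb.
    have [a1 [t1 [e1 _]]] := Hts T1 T1s; have [a2 [t2 [e2 _]]] := Hts T2 T2s.
    by move: h1 h2 eb; rewrite e1 e2 /= => -> -> ->.
  move=> t /mapP [ts]; rewrite mem_filter => /andP [/eqP hts tsF] ->.
  have [T [ts' [e [_ [sz ex]]]]] := Hts ts tsF.
  by move: hts; rewrite e /= => <-; split.
rewrite -big_distrl /= -[X in _ <= X]mul1r ler_wpM2r ?exprn_ge0 //.
rewrite -[X in _ <= X](expr1n _ (rr k)).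
apply: (@prod_bound R _ D predT 1 [::]) => //.
- by move=> W uW _; apply: H1.
- exact: undup_uniq.
move=> T; rewrite mem_undup => /mapP [ts tsF ->].
have [T' [ts' [e [s _]]]] := Hts ts tsF.
by rewrite e /=; split => //; apply/allP.
Qed.

Lemma distr_sum_le1 (R : realType) (Sigma : finType) (D : seq Sigma -> R) :
  is_distr D -> forall W, uniq W -> \sum_(u <- W) D u <= 1.
Proof.
move=> [D0 tot] W uW.
rewrite -lee_fin -sumEFin (fsbig_seq _ _ uW) -tot.
apply: esum_ge; exists [set` W] => //; split; [exact: finite_seq|by []].
Qed.

Lemma bad_compl (R : realType) (Sigma : finType) (D : seq Sigma -> R) (N : rnn R Sigma)
  (psi : ltl Sigma) (eps : R) phi :
  is_distr D -> ~ eps_explanation D N psi eps phi -> forall W, uniq W ->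
  all (fun u => ~~ mismatch N psi phi u) W -> \sum_(u <- W) D u <= 1 - eps.
Proof.
move=> dD bad W uW aW.
have H1 := @distr_sum_le1 _ _ _ dD.
have le : (probD D [set u | mismatch N psi phi u] <= (1 - \sum_(u <- W) D u)%:E)%E.
  apply: ge_ereal_sup => _ [V [finV VM] <-].
  rewrite fsbig_finite //= sumEFin lee_fin lerBrDr -big_cat /=; apply: H1.
  rewrite cat_uniq finmap.fset_uniq uW andbT /=.
  apply/hasPn => u uW'; apply/negP; rewrite in_fset_set // => /set_mem /VM /= mu.
  by move/allP: aW => /(_ u uW'); rewrite mu.
have ge : (eps%:E <= probD D [set u | mismatch N psi phi u])%E.
  by rewrite leNgt; apply/negP.
have := le_trans ge le; rewrite lee_fin => h; lra.
Qed.

Lemma pow_bound (R : realType) (eps delta : R) n : 0 < eps < 1 -> 0 < delta < 1 ->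
  (1 - eps) ^+ suite_size eps delta n <= delta * (2^-1) ^+ n.
Proof.
move=> /andP [e0 e1] /andP [d0 d1].
set x := eps^-1 * (n%:R * ln 2 - ln delta).
have l2 : 0 < ln (2 : R) by apply: ln_gt0; lra.
have ld : ln delta < 0 by apply: ln_lt0; rewrite d0 d1.
have x0 : 0 <= x.
  apply: mulr_ge0; first by rewrite invr_ge0 ltW.
  have : 0 <= n%:R * ln (2:R) by apply: mulr_ge0; rewrite ?ler0n ?ltW.
  lra.
have rx : x <= (suite_size eps delta n)%:R.
  rewrite /suite_size natr_absz ger0_norm ?ceil_ge //.
  by rewrite ceil_ge0 (lt_le_trans _ x0) // ltrN10.
have xe : x * eps = n%:R * ln 2 - ln delta.
  by rewrite /x mulrC mulrA mulfV ?mul1r // gt_eqF.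
apply: (@le_trans _ _ (expR (- eps) ^+ suite_size eps delta n)).
  apply: lerXn2r; rewrite ?nnegrE ?expR_ge0 //; first lra.
  exact: expR_ge1Dx.
rewrite -expRM_natl.
apply: (@le_trans _ _ (expR (ln delta - n%:R * ln 2))).
  rewrite ler_expR.
  have h : x * eps <= (suite_size eps delta n)%:R * eps.
    exact: (ler_wpM2r (ltW e0) rx).
  lra.
by rewrite expRD lnK ?posrE // expRN expRM_natl lnK ?posrE // exprVn.
Qed.

Lemma geom (R : realType) m : \sum_(i <- iota 1 m) (2^-1 : R) ^+ i = 1 - (2^-1) ^+ m.
Proof.
elim: m => [|m IH]; first by rewrite big_nil expr0 subrr.
have -> : iota 1 m.+1 = iota 1 m ++ [:: m.+1] by rewrite -(addn1 m) iotaD add1n addn1.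
rewrite big_cat /= big_seq1 IH exprS.
set y := (2^-1 : R) ^+ m; have h2 : (2^-1 : R) * 2 = 1 by rewrite mulVf. lra.
Qed.

Theorem mainTheorem1 (R : realType) (Sigma : finType) (D : seq Sigma -> R)
  (N : rnn R Sigma) (psi : ltl Sigma) (learner : sample Sigma -> ltl Sigma)
  (eps delta : R) :
  is_distr D -> valid_learner learner ->
  0 < eps < 1 -> 0 < delta < 1 ->
  (lexr_bad_prob D N psi learner eps delta <= delta%:E)%E.
Proof.
move=> dD _ ee dd.
have D0 : forall u, 0 <= D u by case: dD.
have /andP [e0 e1] := ee; have /andP [d0 d1] := dd.
rewrite /lexr_bad_prob; apply: ge_ereal_sup => _ [X [finX XB] <-].
rewrite fsbig_finite //= sumEFin lee_fin.
suff : forall L : seq (seq (seq (seq Sigma))), uniq L ->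
    (forall ts, ts \in L -> lexr_bad_event D N psi learner eps delta ts) ->
    \sum_(ts <- L) suites_weight D ts <= delta.
  apply; first exact: finmap.fset_uniq.
  by move=> ts; rewrite in_fset_set // => /set_mem /XB.
move=> L uL XL.
set m := \max_(ts <- L) size ts.
rewrite (@group_sum _ _ _ size (iota 1 m) L); first last.
- move=> ts tsL; rewrite mem_iota add1n ltnS leq_bigmax_seq // andbT.
  have [_ [phi [run _]]] := XL ts tsL.
  by case: ts run {tsL}.
- exact: iota_uniq.
apply: (@le_trans _ _ (\sum_(n <- iota 1 m) delta * (2^-1) ^+ n)).
  rewrite big_seq [X in _ <= X]big_seq; apply: ler_sum => n; rewrite mem_iota => /andP [n1 _].
  apply: le_trans (@pow_bound R eps delta n ee dd).
  rewrite -big_filter.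
  have -> : n = (1 + n.-1)%N by rewrite add1n prednK.
  apply: (@lexr_bound R Sigma D N psi learner eps (suite_size eps delta) D0 (ltW e1)
     (@distr_sum_le1 _ _ _ dD) (fun phi bad => @bad_compl _ _ D N psi eps phi dD bad) n.-1 1 [::]).
    exact: filter_uniq.
  move=> ts; rewrite mem_filter => /andP [/eqP sz tsL].
  have [[n0 e] ex] := XL ts tsL; split; last exact: ex.
  have : size (map size ts) = n0 by rewrite e size_map size_iota.
  by move=> h; rewrite e; congr (map _ (iota _ _)); rewrite -h size_map sz.
rewrite -big_distrr /= geom -[X in _ <= X]mulr1 ler_wpM2l ?ltW //.
Qed.
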